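(* Let $k$ be a field and $p>7$ an odd prime. Let $R^2_p$ be the $k$-algebra generated by $y_0,\dots,y_{p-1}$ (indices taken modulo $p$) with relations $y_i^2=0$ for $0\le i<p$, and $\sum_{i=0}^{p-1}y_iy_{i+k}=0$ for $1\le k\le p-1$. Then $R^2_p$ is infinite-dimensional. *)

(* Defs.v *)
(* Free (noncommutative) associative k-algebra on generators
   y_0..y_{p-1}, realised as finitely supported k-valued functions on words
   over the alphabet 'I_p, with concatenation-convolution product. *)
From mathcomp Require Import all_boot all_order all_algebra.
Set Implicit Arguments. Unset Strict Implicit. Unset Printing Implicit Defensive.
Import GRing.Theory.
Local Open Scope ring_scope.

Section NC.
Variables (k : fieldType) (p : nat).

Definition word := seq 'I_p.

Definition ncpoly := word -> k.

(* finite support (equivalently, bounded degree, as the alphabet is finite) *)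
Definition is_ncpoly (f : ncpoly) : Prop :=
  exists N : nat, forall w : word, (N <= size w)%N -> f w = 0.

Definition nc_add (f g : ncpoly) : ncpoly := fun w => f w + g w.
Definition nc_scale (c : k) (f : ncpoly) : ncpoly := fun w => c * f w.
Definition nc_zero : ncpoly := fun _ => 0.
Definition nc_mul (f g : ncpoly) : ncpoly :=
  fun w => \sum_(i < (size w).+1) f (take i w) * g (drop i w).

Definition nc_mon2 (i j : 'I_p) : ncpoly :=
  fun w => (w == [:: i; j])%:R.

Definition rel_sq (i : 'I_p) : ncpoly := nc_mon2 i i.

Definition rel_sum (d : nat) : ncpoly :=
  fun w => \sum_(i < p) (map val w == [:: val i; ((val i + d) %% p)%N])%:R.

Definition R2_rel (r : ncpoly) : Prop :=
  (exists i : 'I_p, r = rel_sq i) \/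
  (exists d : nat, (1 <= d <= p - 1)%N /\ r = rel_sum d).

Inductive in_R2_ideal : ncpoly -> Prop :=
| R2I_gen a r b : is_ncpoly a -> is_ncpoly b -> R2_rel r ->
    in_R2_ideal (nc_mul (nc_mul a r) b)
| R2I_zero : in_R2_ideal nc_zero
| R2I_add f g : in_R2_ideal f -> in_R2_ideal g -> in_R2_ideal (nc_add f g)
| R2I_scale c f : in_R2_ideal f -> in_R2_ideal (nc_scale c f).

Definition R2_infinite_dimensional : Prop :=
  forall (m : nat) (g : 'I_m -> ncpoly), (forall j, is_ncpoly (g j)) ->
    ~ (forall f : ncpoly, is_ncpoly f ->
         exists c : 'I_m -> k,
           in_R2_ideal (fun w => f w - \sum_(j < m) c j * g j w)).

End NC.

(* Main.v *)
Require Import Defs.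
From mathcomp Require Import all_boot all_order all_algebra zify.
Set Implicit Arguments. Unset Strict Implicit. Unset Printing Implicit Defensive.
Import GRing.Theory.
Local Open Scope ring_scope.

(* Proof idea: a 4-dimensional representation y_i |-> A_i (i<5), y_i |-> 0 (i>=5),
   with integer entries, kills the relations; since the ideal is homogeneous,
   the degree-n functional Phi n (sum over words of length n) kills the ideal,
   while Phi n of the word (y_0 y_2)^K is (A_0 A_2)^K <> 0. *)

Definition gen (a s t : nat) : int :=
 match a, s, t with
 | 0,0,2 => 1 | 1,0,3 => 1 | 1,1,2 => -1 | 2,1,3 => -1 | 2,2,0 => 1
 | 3,2,1 => 1 | 3,3,0 => -1 | 4,3,1 => -1 | _,_,_ => 0 end.

Definition Az (a : nat) : 'M[int]_4 := \matrix_(s, t) gen a s t.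

Lemma Az_big a : (4 < a)%N -> Az a = 0.
Proof.
move=> ha; apply/matrixP => s t; rewrite !mxE.
by do 5 (case: a ha => [|a] //= ha).
Qed.

Ltac mxcheck := apply/matrixP => -[[|[|[|[|?]]]] ?] -[[|[|[|[|?]]]] ?] //;
  rewrite !mxE /= ?big_ord_recr /= ?big_ord0 ?mxE /=; reflexivity.

Section Main.
Variables (k : fieldType) (p : nat).
Hypothesis hp : (8 < p)%N.

Definition Ak (a : nat) : 'M[k]_4 := map_mx intr (Az a).

Lemma Ak_big a : (4 < a)%N -> Ak a = 0.
Proof. by move=> ha; rewrite /Ak Az_big // map_mx0. Qed.

Ltac closeAk := rewrite ?mulmx0 ?mul0mx ?addr0 ?add0r /Ak -!map_mxM -?map_mxD;
  match goal with |- map_mx _ ?X = 0 => have ->: X = 0 by mxcheck end;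
  by rewrite map_mx0.

Lemma Ak_sq n : Ak n *m Ak n = 0.
Proof.
case: (ltnP 4 n) => [h|]; first by rewrite Ak_big // mul0mx.
by case: n => [|[|[|[|[|n]]]]] //= _; closeAk.
Qed.

Lemma modA i e : (e <= i)%N -> (i < p)%N -> ((i + (p - e)) %% p)%N = (i - e)%N.
Proof.
move=> hei hip.
have -> : (i + (p - e) = (i - e) + p)%N by lia.
by rewrite modnDr modn_small //; lia.
Qed.

Lemma modB i e : (i < e)%N -> (e <= 4)%N -> Ak ((i + (p - e)) %% p) = 0.
Proof.
move=> hie he; rewrite modn_small; last by lia.
by apply: Ak_big; lia.
Qed.

Lemma relsum d : (0 < d < p)%N -> \sum_(i < p) Ak i *m Ak ((i + d) %% p) = 0.
Proof.
move=> /andP[d0 dp].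
rewrite -(big_mkord xpredT (fun i => Ak i *m Ak ((i + d) %% p))).
rewrite (@big_cat_nat _ _ _ 5) //=; last by lia.
rewrite [X in _ + X]big1_seq ?addr0; last first.
  by move=> i /andP[_]; rewrite mem_index_iota => /andP[hi _]; rewrite Ak_big ?mul0mx.
case: (leqP d 4) => hd4.
  rewrite !big_nat_recl // big_geq // addr0 !modn_small; try lia.
  by case: d d0 hd4 {dp} => [|[|[|[|[|d]]]]] //= _ _; closeAk.
case: (leqP (p - 4) d) => hd5.
  have [e [-> he]] : exists e, d = (p - e)%N /\ (0 < e <= 4)%N.
    by exists (p - d)%N; split; lia.
  rewrite !big_nat_recl // big_geq // addr0.
  case: e he => [|[|[|[|[|e]]]]] //= _;
  repeat (first [ rewrite modA; [|by []|lia] | rewrite modB; [|by []|by []] ]); closeAk.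
rewrite big1_seq // => i /andP[_]; rewrite mem_index_iota => /andP[_ hi].
rewrite modn_small; last lia.
by rewrite (@Ak_big (i + d)) ?mulmx0 //; lia.
Qed.
End Main.

Section Words.
Variables (k : fieldType) (p : nat).

Notation Ak := (@Ak k).

Definition Mw (w : word p) : 'M[k]_4 := foldr (fun (a : 'I_p) M => Ak a *m M) 1%:M w.

Lemma Mw_cat u v : Mw (u ++ v) = Mw u *m Mw v.
Proof. by elim: u => [|a u IH] /=; rewrite ?mul1mx // IH mulmxA. Qed.

Fixpoint wlist (n : nat) : seq (word p) :=
  if n is n'.+1 then [seq a :: w | a <- index_enum 'I_p, w <- wlist n'] else [:: [::]].

Lemma wlist_size n w : w \in wlist n -> size w = n.
Proof.
elim: n w => [|n IH] w /=; first by rewrite inE => /eqP ->.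
by case/allpairsP => -[a w'] [_ hw ->] /=; rewrite IH.
Qed.

Lemma wlist_mem n w : size w = n -> w \in wlist n.
Proof.
elim: n w => [|n IH] [|a w] //= [hw].
by apply: (allpairs_f (fun a w => a :: w)); rewrite ?mem_index_enum ?IH.
Qed.

Lemma wlist_uniq n : uniq (wlist n).
Proof.
elim: n => [|n IH] //=.
apply: allpairs_uniq => //; first exact: index_enum_uniq.
by move=> [a w] [b v] _ _ /= [-> ->].
Qed.

Lemma wlist_split i j (F : word p -> word p -> 'M[k]_4) :
  \sum_(w <- wlist (i + j)) F (take i w) (drop i w) =
  \sum_(u <- wlist i) \sum_(v <- wlist j) F u v.
Proof.
elim: i F => [|i IH] F.
  by rewrite add0n big_seq1; apply: eq_bigr => w _; rewrite take0 drop0.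
rewrite addSn /= !big_allpairs_dep; apply: eq_bigr => a _ /=.
exact: (IH (fun u v => F (a :: u) v)).
Qed.

Definition Phi n (f : ncpoly k p) : 'M[k]_4 := \sum_(w <- wlist n) f w *: Mw w.

Lemma Phi_mul n f g :
  Phi n (nc_mul f g) = \sum_(i < n.+1) Phi i f *m Phi (n - i) g.
Proof.
rewrite /Phi /nc_mul.
rewrite (eq_big_seq (fun w => \sum_(i < n.+1)
    (f (take i w) * g (drop i w)) *: (Mw (take i w) *m Mw (drop i w)))); last first.
  move=> w /wlist_size ->; rewrite scaler_suml; apply: eq_bigr => i _.
  by rewrite -Mw_cat cat_take_drop.
rewrite exchange_big /=; apply: eq_bigr => -[i hi] _ /=.
have := wlist_split i (n - i) (fun u v => (f u * g v) *: (Mw u *m Mw v)).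
rewrite subnKC; last by rewrite -ltnS.
move=> ->; rewrite mulmx_suml; apply: eq_bigr => u _.
rewrite mulmx_sumr; apply: eq_bigr => v _.
by rewrite -scalemxAl -scalemxAr scalerA.
Qed.

Lemma Phi_add n f g : Phi n (nc_add f g) = Phi n f + Phi n g.
Proof. by rewrite /Phi -big_split; apply: eq_bigr => w _; rewrite scalerDl. Qed.

Lemma Phi_scale n c f : Phi n (nc_scale c f) = c *: Phi n f.
Proof. by rewrite /Phi scaler_sumr; apply: eq_bigr => w _; rewrite scalerA. Qed.

Lemma Phi_zero n : Phi n (@nc_zero k p) = 0.
Proof. by rewrite /Phi big1 // => w _; rewrite scale0r. Qed.

Lemma Phi2 (f : ncpoly k p) :
  Phi 2 f = \sum_(a : 'I_p) \sum_(b : 'I_p) f [:: a; b] *: (Ak a *m Ak b).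
Proof.
rewrite /Phi (_ : wlist 2 = [seq a :: w | a <- index_enum 'I_p, w <- wlist 1]) //.
rewrite big_allpairs_dep; apply: eq_bigr => a _.
rewrite (_ : wlist 1 = [seq a :: w | a <- index_enum 'I_p, w <- wlist 0]) //.
rewrite big_allpairs_dep; apply: eq_bigr => b _.
by rewrite big_seq1 /= mulmx1.
Qed.


Hypothesis hp : (8 < p)%N.

Lemma Phi_rel n r : R2_rel r -> Phi n r = 0.
Proof.
move=> hr.
have [->|n2] := eqVneq n 2; last first.
  rewrite /Phi big1_seq // => w /andP[_ /wlist_size hw].
  suff -> : r w = 0 by rewrite scale0r.
  case: hr => [[i ->]|[d [_ ->]]].
    rewrite /rel_sq /nc_mon2 (_ : (w == _) = false) //.
    by apply/eqP => hwi; move: n2; rewrite -hw hwi.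
  rewrite /rel_sum big1 // => i _; rewrite (_ : (_ == _) = false) //.
  apply/eqP => h; have := congr1 size h; rewrite size_map hw => hn.
  by rewrite hn in n2.
rewrite Phi2.
case: hr => [[i ->]|[d [hd ->]]].
  rewrite (bigD1 i) //= [X in _ + X]big1 ?addr0; last first.
    move=> a /negbTE hai.
    by rewrite big1 // => b _; rewrite /rel_sq /nc_mon2 eqseq_cons hai /= scale0r.
  rewrite (bigD1 i) //= [X in _ + X]big1 ?addr0; last first.
    move=> b /negbTE hbi.
    by rewrite /rel_sq /nc_mon2 !eqseq_cons eqxx hbi /= scale0r.
  by rewrite /rel_sq /nc_mon2 eqxx scale1r Ak_sq.
have hpos : (0 < p)%N by lia.
have hd' : (0 < d < p)%N by lia.
apply: (eq_trans _ (relsum k hp hd')).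
under eq_bigr do under eq_bigr do rewrite /rel_sum scaler_suml.
under eq_bigr do rewrite exchange_big.
rewrite exchange_big; apply: eq_bigr => i _.
pose j : 'I_p := Ordinal (ltn_pmod (i + d) hpos).
rewrite (bigD1 i) //= [X in _ + X]big1 ?addr0; last first.
  move=> a hai.
  rewrite big1 // => b _; rewrite (_ : (_ == _) = false) ?scale0r //.
  by rewrite eqseq_cons (_ : (val a == val i) = false) //; apply/negbTE.
rewrite (bigD1 j) //= [X in _ + X]big1 ?addr0; last first.
  move=> b hbj.
  rewrite (_ : (_ == _) = false) ?scale0r //.
  rewrite !eqseq_cons eqxx /=; apply/negbTE; apply: contra hbj => /andP[/eqP hb _].
  by apply/eqP/val_inj; rewrite /= hb.
by rewrite !eqxx scale1r.
Qed.

Lemma Phi_ideal h : in_R2_ideal h -> forall n, Phi n h = 0.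
Proof.
elim=> [a r b _ _ hr n|n|f g _ IHf _ IHg n|c f _ IH n].
- rewrite Phi_mul big1 // => i _; rewrite Phi_mul big1 ?mul0mx // => j _.
  by rewrite (Phi_rel _ hr) mulmx0.
- exact: Phi_zero.
- by rewrite Phi_add IHf IHg addr0.
- by rewrite Phi_scale IH scaler0.
Qed.

End Words.

Fixpoint wz p (a b : 'I_p) (K : nat) : word p :=
  if K is K'.+1 then a :: b :: wz a b K' else [::].

Lemma size_wz p (a b : 'I_p) K : size (wz a b K) = K.*2.
Proof. by elim: K => //= K ->. Qed.

Lemma A02 (k : fieldType) : Ak k 0 *m Ak k 2 = delta_mx ord0 ord0.
Proof.
rewrite /Ak -map_mxM (_ : Az 0 *m Az 2 = delta_mx ord0 ord0) ?map_delta_mx //.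
by apply/matrixP => -[[|[|[|[|?]]]] ?] -[[|[|[|[|?]]]] ?] //;
  rewrite !mxE /= ?big_ord_recr /= ?big_ord0 ?mxE /=; reflexivity.
Qed.

Lemma Mwz (k : fieldType) p (a b : 'I_p) K :
  val a = 0%N -> val b = 2%N -> Mw k (wz a b K) ord0 ord0 = 1.
Proof.
move=> ha hb; elim: K => [|K IH] /=; first by rewrite mxE.
rewrite ha hb mulmxA A02 mxE (bigD1 ord0) //= mxE eqxx mul1r IH big1 ?addr0 //.
by move=> r hr; rewrite mxE (negbTE hr) /= mul0r.
Qed.

Theorem proposition3p31 (k : fieldType) (p : nat) :
  prime p -> odd p -> (7 < p)%N -> R2_infinite_dimensional k p.
Proof.
move=> hpr hodd h7.
have hp : (8 < p)%N.
  have : p != 8%N by apply/eqP => E; rewrite E in hodd.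
  lia.
move=> m g hg hspan.
have [N hN] : exists N, forall j w, (N <= size w)%N -> g j w = 0.
  have [Nf hNf] := @fin_all_exists _ _
     (fun j N => forall w, (N <= size w)%N -> g j w = 0) hg.
  exists (\max_(j < m) Nf j) => j w hw; apply: hNf.
  exact: leq_trans (leq_bigmax j) hw.
have h0 : (0 < p)%N by lia.
have h2 : (2 < p)%N by lia.
pose o0 : 'I_p := Ordinal h0.
pose o2 : 'I_p := Ordinal h2.
pose f := fun w : word p => ((w == wz o0 o2 N)%:R : k).
have hf : is_ncpoly f.
  exists (N.*2).+1 => w hw; rewrite /f (_ : (w == _) = false) //.
  by apply/eqP => E; move: hw; rewrite E size_wz ltnn.
have [c hc] := hspan f hf.
have := Phi_ideal hp hc (N.*2).
have -> : Phi (N.*2) (fun w => f w - \sum_(j < m) c j * g j w) = Phi (N.*2) f.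
  apply: eq_big_seq => w /wlist_size hw; rewrite big1 ?subr0 // => j _.
  by rewrite hN ?mulr0 // hw -addnn leq_addr.
rewrite /Phi (bigD1_seq (wz o0 o2 N)) ?wlist_uniq ?wlist_mem ?size_wz //=.
rewrite big1 => [|w /negbTE hw]; last by rewrite /f hw scale0r.
rewrite /f eqxx scale1r addr0 => /matrixP /(_ ord0 ord0).
by rewrite Mwz // mxE => /eqP; rewrite oner_eq0.
Qed.
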